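(* Let $w$, $w_1$, $w_2$ be binary words, and let $p_1<p_2<\dots<p_k$ be all lost positions of $w$. Then $1<p_1$ and $p_k<|w|$, and there is a monotonically increasing injective mapping \[\mu:\{p_1,\dots,p_k\}\to\{1,2,\dots,|w|-1\}\] such that for all $i=1,\dots,k$, the position $|w_1|+\mu(p_i)$ is lost in the word $w_1ww_2$ and $\mu(p_i)\le p_i$.
   Context: Words are finite sequences over $\{0,1\}$; $w[i..j]=w[i]\cdots w[j]$; $\bar c$ denotes the letter different from $c$. A period of $w$ is $p\ge1$ with $w[i+p]=w[i]$ for all $1\le i\le|w|-p$. A run of $w$ is an interval $[i..j]$, $1\le i<j\le|w|$, such that with $p$ the least period of $w[i..j]$: $j-i+1\ge 2p$, ($i=1$ or $w[i-1]\ne w[i-1+p]$), and ($j=|w|$ or $w[j+1]\ne w[j+1-p]$). For $c\in\{0,1\}$, $<_c$ is the lexicographic order on words from the letter order $0<_01$, resp. $1<_10$ (proper prefixes are smaller). A nonempty word $x$ is $<$-Lyndon if for every factorization $x=yz$, $y,z$ nonempty, $x\neq zy$ and $x<zy$. For a position $1<i\le|w|$ define: $c_w(i)=\overline{w[i-1]}$; $L_w(i)=\max\{j: w[i..j]$ is $<_{c_w(i)}$-Lyndon$\}$; $D_w(i)=L_w(i)-i+1$; $S_w(i)=\min\{j: D_w(i)$ is a period of $w[j..L_w(i)]\}$; $E_w(i)=\max\{j: D_w(i)$ is a period of $w[i..j]\}$; $R_w(i)=[S_w(i)..E_w(i)]$. For a run $r=[s..e]$ of $w$ with $e=|w|$ and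 $c\in\{0,1\}$ let $r_w(c)=\min\{i: R_w(i)=r$ and $w[i..L_w(i)]$ is $<_c$-Lyndon$\}$, and let $f_w(r)\in\{0,1\}$ be such that $r_w(f_w(r))\ge r_w(\overline{f_w(r)})$, with $f_w(r)=0$ if the period of $w[s..e]$ is one. A position $1<i\le|w|$ is lost in $w$ iff one of: (i) $E_w(i)<|w|$, $S_w(i)>1$ and $R_w(i)$ is not a run; (ii) $E_w(i)<|w|$, $R_w(i)$ is a run, and $i+D_w(i)\le E_w(i)$; (iii) $E_w(i)=|w|$, $R_w(i)$ is a run $r$, $i+D_w(i)\le E_w(i)$, $S_w(i)<i$, and $w[i..L_w(i)]$ is $<_{f_w(r)}$-Lyndon. *)

(* Defs.v *)
(* Binary words are seq bool: letter 0 = false, letter 1 = true.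
   Positions are 1-indexed as in the paper. *)
From mathcomp Require Import all_boot.
From mathcomp Require Import zify.
Set Implicit Arguments. Unset Strict Implicit. Unset Printing Implicit Defensive.

Definition word := seq bool.

Definition letter (w : word) (i : nat) : bool := nth false w i.-1.

Definition factor (w : word) (i j : nat) : word := drop i.-1 (take j w).

Definition period (u : word) (p : nat) : bool :=
  (0 < p) && [forall k : 'I_(size u), (k + p < size u) ==> (nth false u (k + p) == nth false u k)].

Lemma period_exists (u : word) : exists p, period u p.
Proof.
exists (size u).+1; apply/andP; split => //.
apply/forallP => k; apply/implyP => H; exfalso; have := ltn_ord k; lia.
Qed.

Definition lper (u : word) : nat := ex_minn (period_exists u).

Definition is_run (w : word) (i j : nat) : Prop :=
  let p := lper (factor w i j) in
  [/\ 1 <= i < j, j <= size w,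
      p.*2 <= j - i + 1,
      (i = 1 \/ letter w i.-1 != letter w (i.-1 + p)) &
      (j = size w \/ letter w j.+1 != letter w (j.+1 - p))].

Fixpoint lexlt (c : bool) (x y : word) : bool :=
  match x, y with
  | [::], _ :: _ => true
  | _, [::] => false
  | a :: x', b :: y' => if a == b then lexlt c x' y' else a == c
  end.

(* x is <_c-Lyndon: nonempty, and for each factorization x = yz (y, z nonempty),
   x <> zy and x <_c zy;  zy = rot |y| x *)
Definition lyndon (c : bool) (x : word) : bool :=
  (x != [::]) &&
  [forall k : 'I_(size x), (0 < k) ==> ((rot k x != x) && lexlt c x (rot k x))].

Definition cw (w : word) (i : nat) : bool := ~~ letter w i.-1.

Definition Lw (w : word) (i : nat) : nat :=
  \max_(i <= j < (size w).+1 | lyndon (cw w i) (factor w i j)) j.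

Definition Dw (w : word) (i : nat) : nat := Lw w i - i + 1.

(* min over j >= 1; j = i always qualifies, so restricting to j <= i is harmless *)
Definition Sw (w : word) (i : nat) : nat :=
  \big[minn/i]_(1 <= j < i.+1 | period (factor w j (Lw w i)) (Dw w i)) j.

Definition Ew (w : word) (i : nat) : nat :=
  \max_(i <= j < (size w).+1 | period (factor w i j) (Dw w i)) j.

Definition Rw (w : word) (i : nat) : nat * nat := (Sw w i, Ew w i).

(* r_w(c) for r = [s..e]; min of the empty set is represented by |w|+1 (= infinity) *)
Definition rw (w : word) (r : nat * nat) (c : bool) : nat :=
  \big[minn/(size w).+1]_(2 <= i < (size w).+1 |
      (Rw w i == r) && lyndon c (factor w i (Lw w i))) i.

Definition fw (w : word) (r : nat * nat) : bool :=
  if lper (factor w r.1 r.2) == 1 then false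
  else rw w r false <= rw w r true.

Definition lost (w : word) (i : nat) : Prop :=
  1 < i <= size w /\
  let S := Sw w i in let E := Ew w i in let D := Dw w i in
  [\/ [/\ E < size w, 1 < S & ~ is_run w S E],
      [/\ E < size w, is_run w S E & i + D <= E] |
      [/\ E = size w, is_run w S E, i + D <= E, S < i &
          lyndon (fw w (S, E)) (factor w i (Lw w i))]].

(* Main.v *)
Require Import Defs.
From mathcomp Require Import all_boot zify.
From Stdlib Require Import Classical_Prop IndefiniteDescription.
Set Implicit Arguments. Unset Strict Implicit. Unset Printing Implicit Defensive.

Ltac slia := lia || match goal with |- _ -> _ => fail 1 | _ => (repeat (apply/andP; split); lia) end.

Lemma size_factor w i j : 1 <= i -> j <= size w -> size (factor w i j) = j.+1 - i.
Proof. move=> Hi Hj; rewrite /factor size_drop size_take.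
case: ltnP => H; slia. Qed.

Lemma nth_factor w i j k : 1 <= i -> j <= size w -> k < j.+1 - i ->
  nth false (factor w i j) k = letter w (i + k).
Proof.
move=> Hi Hj Hk; rewrite /factor nth_drop nth_take; last by slia.
rewrite /letter; congr nth; slia.
Qed.

Lemma letter_cat w1 w w2 k : 1 <= k <= size w ->
  letter (w1 ++ w ++ w2) (size w1 + k) = letter w k.
Proof.
move=> /andP[H1 H2]; rewrite /letter nth_cat.
have -> : (size w1 + k).-1 < size w1 = false by slia.
have -> : (size w1 + k).-1 - size w1 = k.-1 by slia.
by rewrite nth_cat; have -> : k.-1 < size w by slia.
Qed.

Lemma size_cat3 (w1 w w2 : word) : size (w1 ++ w ++ w2) = size w1 + size w + size w2.
Proof. by rewrite !size_cat addnA. Qed.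

Lemma factor_cat w1 w w2 i j : 1 <= i -> j <= size w ->
  factor (w1 ++ w ++ w2) (size w1 + i) (size w1 + j) = factor w i j.
Proof.
move=> Hi Hj; apply: (@eq_from_nth _ false).
  rewrite !size_factor ?size_cat3 //; slia.
move=> k Hk; rewrite size_factor ?size_cat3 // in Hk; try slia.
rewrite !nth_factor ?size_cat3 //; try slia.
rewrite -addnA letter_cat //; slia.
Qed.

Lemma cw_cat w1 w w2 i : 2 <= i <= size w -> cw (w1 ++ w ++ w2) (size w1 + i) = cw w i.
Proof.
move=> H; rewrite /cw.
have -> : (size w1 + i).-1 = size w1 + i.-1 by slia.
rewrite letter_cat //; slia.
Qed.

Definition perw (w : word) (D s e : nat) : Prop :=
  forall k, s <= k -> k + D <= e -> letter w k = letter w (k + D).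

Lemma periodP w i j D : 1 <= i -> j <= size w ->
  period (factor w i j) D <-> (0 < D /\ perw w D i j).
Proof.
move=> Hi Hj; rewrite /period; split.
- move=> /andP[HD /forallP H]; split => // k Hk1 Hk2.
  have Hk : k - i < size (factor w i j) by rewrite size_factor //; slia.
  have := H (Ordinal Hk); rewrite /= size_factor //.
  move/implyP; have -> : k - i + D < j.+1 - i by slia.
  move=> /(_ isT) /eqP; rewrite !nth_factor //; try lia.
  have -> : i + (k - i) = k by slia.
  by have -> : i + (k - i + D) = k + D by slia.
- move=> [HD H]; rewrite HD /=; apply/forallP => k.
  have Hk0 := ltn_ord k; move: (nat_of_ord k) Hk0 => m Hk0; apply/implyP => Hk.
  rewrite size_factor // in Hk Hk0.
  rewrite !nth_factor //; try lia.
  rewrite addnA -H //; slia.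
Qed.

Lemma perw_sub w D s e s' e' : perw w D s e -> s <= s' -> e' <= e -> perw w D s' e'.
Proof. move=> H H1 H2 k Hk1 Hk2; apply: H; slia. Qed.

Lemma perw_mult w D s e k m : perw w D s e -> s <= k -> k + m * D <= e ->
  letter w (k + m * D) = letter w k.
Proof.
move=> H Hk; elim: m => [|m IH] Hm; first by rewrite addn0.
rewrite mulSn addnA (addnC k D) -addnA -(IH _); last by slia.
rewrite (addnC D) (H (k + m*D)) //; slia.
Qed.

Lemma perw_overlap w D s L i e : perw w D s L -> perw w D i e -> s <= i -> L.+1 - i = D -> 0 < D ->
  perw w D s e.
Proof.
move=> H1 H2 Hsi HD HD0 k Hk1 Hk2.
case: (leqP (k + D) L) => H; first by apply: H1.
apply: H2 => //; slia.
Qed.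

Lemma lexlt_asym c x y : lexlt c x y -> lexlt c y x -> False.
Proof.
elim: x y => [|a x IH] [|b y] //=.
case: (eqVneq a b) => [_|Hab]; rewrite ?eqxx; first exact: IH.
move=> /eqP Hac /eqP Hbc.
by move: Hab; rewrite Hac Hbc eqxx.
Qed.

Lemma lexlt_mismatch c x y t : t < size x -> t < size y ->
  (forall s, s < t -> nth false x s = nth false y s) ->
  nth false x t != nth false y t -> lexlt c x y = (nth false x t == c).
Proof.
elim: t x y => [|t IH] [|a x] [|b y] //=.
- by move=> _ _ _ /negbTE ->.
- move=> Hx Hy H Hn; have := H 0 isT; rewrite /= => ->; rewrite eqxx.
  apply: IH => // s Hs; exact: (H s.+1).
Qed.

Lemma bigmax_spec (r : seq nat) (P : pred nat) :
  let M := \max_(i <- r | P i) i in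
  (forall j, j \in r -> P j -> j <= M) /\ (M = 0 \/ (M \in r /\ P M)).
Proof.
rewrite /=; elim: r => [|x r [IH1 IH2]]; first by rewrite big_nil; split => //; left.
rewrite big_cons; case: ifP => Px.
- split.
  + move=> j; rewrite in_cons => /orP[/eqP->|Hj] Pj; first by apply: leq_maxl.
    apply: leq_trans (leq_maxr _ _); exact: IH1.
  + case: (leqP x (\max_(i <- r | P i) i)) => H.
    * case: IH2 => [E|[H1 H2]]; last by right; rewrite in_cons H1 orbT.
      by left.
    * right; by rewrite in_cons eq_refl.
- split.
  + move=> j; rewrite in_cons => /orP[/eqP->|Hj] Pj; first by rewrite Px in Pj.
    exact: IH1.
  + case: IH2 => [->|[H1 H2]]; [by left | by right; rewrite in_cons H1 orbT].
Qed.

Lemma bigmin_spec (r : seq nat) (P : pred nat) d :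
  let M := \big[minn/d]_(i <- r | P i) i in
  (forall j, j \in r -> P j -> M <= j) /\ M <= d /\ (M = d \/ (M \in r /\ P M)).
Proof.
rewrite /=; elim: r => [|x r [IH1 [IH0 IH2]]]; first by rewrite big_nil; split => //; split => //; left.
rewrite big_cons; case: ifP => Px.
- split; last split.
  + move=> j; rewrite in_cons => /orP[/eqP->|Hj] Pj; first by apply: geq_minl.
    apply: leq_trans (geq_minr _ _) _; exact: IH1.
  + apply: leq_trans (geq_minr _ _) IH0.
  + case: (leqP x (\big[minn/d]_(i <- r | P i) i)) => H.
    * right; by rewrite in_cons eq_refl.
    * case: IH2 => [->|[H1 H2]]; first by left.
      by right; rewrite in_cons H1 orbT.
- split; last split => //.
  + move=> j; rewrite in_cons => /orP[/eqP->|Hj] Pj; first by rewrite Px in Pj.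
    exact: IH1.
  + case: IH2 => [->|[H1 H2]]; [by left | by right; rewrite in_cons H1 orbT].
Qed.

Lemma bigmax_nat a b (P : pred nat) m : a <= m < b -> P m ->
  let M := \max_(a <= i < b | P i) i in
  [/\ a <= M < b, P M & forall j, M < j < b -> ~~ P j].
Proof.
move=> Hm Pm /=; have [H1 H2] := bigmax_spec (index_iota a b) P.
have Hm' : m <= \max_(a <= i < b | P i) i by apply: H1 => //; rewrite mem_index_iota.
case: H2 => [H0|[H2 H3]].
- rewrite H0 in Hm'; move: Hm'; rewrite leqn0 => /eqP Hm0; subst m.
  rewrite H0; have Ha : a = 0 by slia. subst a.
  split => //.
  move=> j Hj; apply/negP => Pj; have := H1 j; rewrite mem_index_iota H0.
  move=> /(_ _ Pj); slia.
- move: H2; rewrite mem_index_iota => H2; split => // j Hj; apply/negP => Pj.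
  have := H1 j; rewrite mem_index_iota => /(_ _ Pj); slia.
Qed.

Lemma bigmin_nat a b (P : pred nat) d : P d -> a <= d -> d < b ->
  let M := \big[minn/d]_(a <= i < b | P i) i in
  [/\ a <= M <= d, P M & forall j, a <= j < M -> ~~ P j].
Proof.
move=> Pd Had Hdb /=; have [H1 [H0 H2]] := bigmin_spec (index_iota a b) P d.
split.
- case: H2 => [->|[H2 _]]; first by rewrite Had leqnn.
  by move: H2; rewrite mem_index_iota => /andP[-> _].
- by case: H2 => [->|[]].
- move=> j Hj; apply/negP => Pj.
  have Hjb : j < b.
  { case: H2 => [Hd|[H2 _]]; last by move: H2; rewrite mem_index_iota; slia.
    lia. }
  have := H1 j; rewrite mem_index_iota => /(_ _ Pj); slia.
Qed.

Notation nth0 := (nth false).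

Lemma nth_rot_lo (x : word) k s : s + k < size x -> nth0 (rot k x) s = nth0 x (s + k).
Proof.
move=> H; rewrite /rot nth_cat size_drop; have -> : s < size x - k by slia.
rewrite nth_drop; congr nth; slia.
Qed.

Lemma nth_rot_hi (x : word) k s : k <= size x -> size x - k <= s < size x ->
  nth0 (rot k x) s = nth0 x (s + k - size x).
Proof.
move=> Hk H; rewrite /rot nth_cat size_drop; have -> : s < size x - k = false by slia.
rewrite nth_take; last by slia. congr nth; slia.
Qed.

Lemma bool_neq (a b : bool) : a != b -> b = ~~ a.
Proof. by case: a; case: b. Qed.

Lemma cross (A B : nat -> bool) c u t :
  (forall v, v < u -> B v = A v) -> B u = c -> A u = ~~ c ->
  (forall v, v < t -> A v = B v) -> A t = c -> B t = ~~ c -> False.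
Proof.
move=> H1 H2 H3 H4 H5 H6.
case: (ltngtP u t) => H.
- have := H4 u H; rewrite H2 H3; by case: (c).
- have := H1 t H; rewrite H5 H6; by case: (c).
- subst t; move: H5; rewrite H3; by case: (c).
Qed.

Lemma first_diff (x y : word) : size x = size y -> x != y ->
  exists t, [/\ t < size x, (forall s, s < t -> nth0 x s = nth0 y s) & nth0 x t != nth0 y t].
Proof.
elim: x y => [|a x IH] [|b y] //= [Hs] Hne.
case: (eqVneq a b) => [Hab|Hab].
- subst b; have Hxy : x != y by apply: contra Hne => /eqP ->.
  have [t [H1 H2 H3]] := IH y Hs Hxy.
  exists t.+1; split => //; case => // s /= Hst; exact: H2.
- by exists 0; split.
Qed.

Lemma lyndon_fm c x k : lyndon c x -> 0 < k < size x ->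
  exists t, [/\ t < size x, (forall s, s < t -> nth0 x s = nth0 (rot k x) s),
              nth0 x t = c & nth0 (rot k x) t = ~~ c].
Proof.
move=> /andP[_ /forallP H] /andP[Hk0 Hk].
have := H (Ordinal Hk); rewrite /= Hk0 /= => /andP[Hne Hlt].
have Hne' : x != rot k x by rewrite eq_sym.
have [t [H1 H2 H3]] := first_diff (esym (size_rot _ _)) Hne'.
have Ht1 : t < size (rot k x) by rewrite size_rot.
have := lexlt_mismatch c H1 Ht1 H2 H3; rewrite Hlt => /esym/eqP Hxt.
exists t; split => //.
by rewrite -Hxt; apply: bool_neq.
Qed.

Lemma lyndon_noper c x k : lyndon c x -> 0 < k < size x ->
  (forall s, s + k < size x -> nth0 x s = nth0 x (s + k)) -> False.
Proof.
move=> Ly Hk Hper; have /andP[Hk0 Hkn] := Hk.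
have [t0 [Ht0 Ag0 X0 R0]] := lyndon_fm Ly Hk.
have Ht0k : size x <= t0 + k.
{ rewrite leqNgt; apply/negP => H; move: R0; rewrite nth_rot_lo // -Hper // X0.
  by case: (c). }
have Hk' : 0 < size x - k < size x by slia.
have [t1 [Ht1 Ag1 X1 R1]] := lyndon_fm Ly Hk'.
have Ht1k : t1 < k.
{ rewrite ltnNge; apply/negP => H; move: R1; rewrite nth_rot_hi; try slia.
  have -> : t1 + (size x - k) - size x = t1 - k by slia.
  rewrite Hper; last by slia.
  have -> : t1 - k + k = t1 by slia. by rewrite X1; case: (c). }
apply: (@cross (fun v => nth0 x v) (fun v => nth0 x (v + (size x - k))) c (t0 + k - size x) t1) => /=.
- move=> v Hv; have := Ag0 (v + (size x - k)) ltac:(slia).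
  rewrite nth_rot_hi; try slia. by have -> : v + (size x - k) + k - size x = v by slia.
- by have -> : t0 + k - size x + (size x - k) = t0 by slia.
- by move: R0; rewrite nth_rot_hi; try slia.
- move=> v Hv; rewrite (Ag1 v) ?nth_rot_lo //; slia.
- done.
- by move: R1; rewrite nth_rot_lo //; slia.
Qed.

Lemma lyndonE c x k : lyndon c x -> 0 < k < size x ->
  exists t, [/\ t + k < size x, (forall s, s < t -> nth0 x s = nth0 x (s + k)),
              nth0 x t = c & nth0 x (t + k) = ~~ c].
Proof.
move=> Ly Hk; have [t [Ht Ag X R]] := lyndon_fm Ly Hk.
case: (ltnP (t + k) (size x)) => H.
- exists t; split => //.
  + move=> s Hs; rewrite Ag // nth_rot_lo //; slia.
  + by rewrite -nth_rot_lo.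
- exfalso; apply: (lyndon_noper Ly Hk) => s Hs.
  rewrite Ag ?nth_rot_lo //; slia.
Qed.

Lemma lyndon_last c x : lyndon c x -> 1 < size x ->
  nth0 x 0 = c /\ nth0 x (size x).-1 = ~~ c.
Proof.
move=> Ly H; have Hk : 0 < (size x).-1 < size x by slia.
have [t [Ht _ X R]] := lyndonE Ly Hk.
have Ht0 : t = 0 by slia. subst t; by rewrite add0n in R.
Qed.

Lemma lyndon1 c x : size x = 1 -> lyndon c x.
Proof.
move=> H; rewrite /lyndon; apply/andP; split; first by case: x H.
apply/forallP => k; have := ltn_ord k; move: (nat_of_ord k) => m; rewrite H.
by case: m.
Qed.

Lemma lyndonI c x : 0 < size x ->
  (forall k, 0 < k < size x -> exists t, [/\ t + k < size x,
     (forall s, s < t -> nth0 x s = nth0 x (s + k)), nth0 x t = c & nth0 x (t + k) = ~~ c]) ->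
  lyndon c x.
Proof.
move=> Hx H; apply/andP; split; first by rewrite -size_eq0 -lt0n.
apply/forallP => k; apply/implyP => Hk0.
have Hk : 0 < k < size x by rewrite Hk0 ltn_ord.
have [t [Ht Ag X R]] := H _ Hk.
have Hrt : nth0 (rot k x) t = ~~ c by rewrite nth_rot_lo.
have Hne : nth0 x t != nth0 (rot k x) t by rewrite X Hrt; case: (c).
apply/andP; split.
- apply/negP => /eqP E; move: Hne; by rewrite E eqxx.
- rewrite (lexlt_mismatch c _ _ _ Hne) ?X ?eqxx ?size_rot //; try slia.
  move=> s Hs; rewrite nth_rot_lo; [exact: Ag | slia].
Qed.

Lemma lper_spec u : period u (lper u) /\ forall p, period u p -> lper u <= p.
Proof.
rewrite /lper; case: ex_minnP => m Hm Hmin; split => //.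
Qed.

Lemma not_lyndon_per w c j t D : 1 <= j -> t <= size w -> 0 < D -> D < t.+1 - j ->
  perw w D j t -> ~~ lyndon c (factor w j t).
Proof.
move=> Hj Ht HD HDt Hp; apply/negP => Ly.
apply: (lyndon_noper (k := D) Ly); first by rewrite size_factor //; slia.
move=> s; rewrite size_factor // => Hs.
rewrite !nth_factor //; try slia. rewrite addnA Hp //; slia.
Qed.

Lemma LS w c j D E t : 1 <= j -> 0 < D -> j + D <= E.+1 -> E < t -> t <= size w ->
  perw w D j E -> letter w E.+1 = c -> letter w (E.+1 - D) = ~~ c ->
  ~~ lyndon c (factor w j t).
Proof.
move=> Hj HD HjD HEt Ht Hp L1 L2; apply/negP => Ly.
have Hk : 0 < D < size (factor w j t) by rewrite size_factor //; slia.
have [t1 [Ht1 Ag X R]] := lyndonE Ly Hk.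
rewrite size_factor // in Ht1.
rewrite !nth_factor // in X R; try slia.
set t2 := E.+1 - D - j.
case: (ltngtP t1 t2) => H.
- move: R; rewrite addnA -Hp; try slia.
- have := Ag t2 H; rewrite !nth_factor //; try slia.
  have -> : j + t2 = E.+1 - D by slia.
  have -> : j + (t2 + D) = E.+1 by slia.
  rewrite L1 L2; by case: (c).
- move: X; have -> : j + t1 = E.+1 - D by slia. rewrite L2; by case: (c).
Qed.

Lemma LX w c j D E : 1 <= j -> 0 < D -> j + D <= E.+1 -> E < size w ->
  lyndon c (factor w j (j + D - 1)) -> perw w D j E ->
  letter w E.+1 = ~~ c -> letter w (E.+1 - D) = c ->
  lyndon c (factor w j E.+1).
Proof.
move=> Hj HD HjD HE Ly Hp L1 L2.
have Hsz : size (factor w j E.+1) = E.+2 - j by rewrite size_factor.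
have Hszl : size (factor w j (j + D - 1)) = D by rewrite size_factor //; slia.
apply: lyndonI; first by rewrite Hsz; slia.
rewrite Hsz => k Hk.
have Hnth : forall s, s < E.+2 - j -> nth0 (factor w j E.+1) s = letter w (j + s).
{ move=> s Hs; rewrite nth_factor //. }
have Hnl : forall s, s < D -> nth0 (factor w j (j + D - 1)) s = letter w (j + s).
{ move=> s Hs; rewrite nth_factor //; slia. }
have Hkd := divn_eq k D. set q := k %/ D in Hkd. set r := k %% D in Hkd.
have Hr : r < D by rewrite /r ltn_mod.
have PM : forall z m, j <= z -> z + m * D <= E -> letter w (z + m * D) = letter w z.
{ move=> z m Hz Hzm; exact: perw_mult Hp Hz Hzm. }
case: (posnP r) => Hr0.
-
  rewrite Hr0 addn0 in Hkd.
  have Hq : 0 < q by case: (posnP q) Hkd => [->|//]; rewrite mul0n; slia.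
  set QD := q * D in Hkd PM.
  exists (E.+1 - j - k); split; first by slia.
  + move=> s Hs; rewrite !Hnth; try slia.
    have -> : j + (s + k) = (j + s) + q * D by rewrite -/QD; slia.
    rewrite PM //; rewrite -/QD; slia.
  + rewrite Hnth; last by slia.
    have HqD : D <= QD by rewrite /QD leq_pmull.
    have -> : j + (E.+1 - j - k) = (E.+1 - k) by slia.
    rewrite -L2; have -> : E.+1 - D = (E.+1 - k) + (q.-1) * D.
    { rewrite mulnC -subn1 mulnBr muln1 mulnC -/QD; slia. }
    rewrite PM //; last by rewrite mulnC -subn1 mulnBr muln1 mulnC -/QD; slia.
    slia.
  + rewrite Hnth; last by slia. have -> : j + (E.+1 - j - k + k) = E.+1 by slia. done.
-
  have Hr' : 0 < r < size (factor w j (j + D - 1)) by rewrite Hszl Hr0 Hr.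
  have [t0 [Ht0 Ag0 X0 R0]] := lyndonE Ly Hr'.
  rewrite Hszl in Ht0.
  rewrite !Hnl in X0 R0; try slia.
  set QD := q * D in Hkd PM.
  case: (leqP (j + k + t0) E.+1) => Hle.
  + exists t0; split; first by slia.
    * move=> s Hs; rewrite !Hnth; try slia.
      have := Ag0 s Hs; rewrite !Hnl; try slia. move=> ->.
      have -> : j + (s + k) = (j + (s + r)) + q * D by rewrite -/QD; slia.
      rewrite PM //; rewrite -/QD; slia.
    * rewrite Hnth //; slia.
    * rewrite Hnth; last by slia.
      case: (ltngtP (j + k + t0) E.+1) => H; last by rewrite -L1; congr letter; slia.
      -- have -> : j + (t0 + k) = (j + (t0 + r)) + q * D by rewrite -/QD; slia.
         rewrite PM //; try rewrite -/QD; slia.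
      -- slia.
  + have Hq : 0 < q.
    { case: (posnP q) Hkd => [Hq0|//]. rewrite /QD Hq0 mul0n add0n => Hkr. slia. }
    have HqD : D <= QD by rewrite /QD leq_pmull.
    exists (E.+1 - j - k); split; first by slia.
    * move=> s Hs; rewrite !Hnth; try slia.
      have := Ag0 s ltac:(slia); rewrite !Hnl; try slia. move=> ->.
      have -> : j + (s + k) = (j + (s + r)) + q * D by rewrite -/QD; slia.
      rewrite PM //; rewrite -/QD; slia.
    * rewrite Hnth; last by slia.
      set t := E.+1 - j - k.
      have := Ag0 t ltac:(slia); rewrite !Hnl; try slia. move=> ->.
      rewrite -L2; have -> : E.+1 - D = (j + (t + r)) + (q.-1) * D.
      { rewrite mulnC -subn1 mulnBr muln1 mulnC -/QD; slia. }
      rewrite PM //; first by slia.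
      rewrite mulnC -subn1 mulnBr muln1 mulnC -/QD; slia.
    * rewrite Hnth; last by slia. have -> : j + (E.+1 - j - k + k) = E.+1 by slia. done.
Qed.

Lemma Lw_spec w i : 1 <= i <= size w ->
  [/\ i <= Lw w i <= size w, lyndon (cw w i) (factor w i (Lw w i)) &
      forall j, Lw w i < j <= size w -> ~~ lyndon (cw w i) (factor w i j)].
Proof.
move=> Hi.
have P0 : lyndon (cw w i) (factor w i i) by apply: lyndon1; rewrite size_factor; slia.
have [H1 H2 H3] : [/\ i <= Lw w i < (size w).+1, lyndon (cw w i) (factor w i (Lw w i)) & forall j, Lw w i < j < (size w).+1 -> ~~ lyndon (cw w i) (factor w i j)] := bigmax_nat (P := fun j => lyndon (cw w i) (factor w i j)) (a := i) (b := (size w).+1) (m := i) ltac:(slia) P0.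
split => //; try slia.
Qed.

Lemma Dw_pos w i : 0 < Dw w i.
Proof. rewrite /Dw; slia. Qed.

Lemma Ew_spec w i : 1 <= i <= size w ->
  [/\ i <= Ew w i <= size w, perw w (Dw w i) i (Ew w i) &
      forall j, Ew w i < j <= size w -> ~ perw w (Dw w i) i j].
Proof.
move=> Hi.
have HD := Dw_pos w i.
have P0 : period (factor w i i) (Dw w i).
{ apply/periodP; try slia. split => // k; slia. }
have [H1 H2 H3] : [/\ i <= Ew w i < (size w).+1, period (factor w i (Ew w i)) (Dw w i) & forall j, Ew w i < j < (size w).+1 -> ~~ period (factor w i j) (Dw w i)] := bigmax_nat (P := fun j => period (factor w i j) (Dw w i)) (a := i) (b := (size w).+1) (m := i) ltac:(slia) P0.
split => //; try slia.
- have Hx : Ew w i <= size w by slia.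
  by case/(periodP (Dw w i) (proj1 (andP Hi)) Hx): H2.
- move=> j Hj Hp; have := H3 j ltac:(slia); move/negP; apply.
  have Hx : j <= size w by slia.
  by apply/(periodP (Dw w i) (proj1 (andP Hi)) Hx).
Qed.

Lemma Sw_spec w i : 1 <= i <= size w ->
  [/\ 1 <= Sw w i <= i, perw w (Dw w i) (Sw w i) (Lw w i) &
      forall j, 1 <= j < Sw w i -> ~ perw w (Dw w i) j (Lw w i)].
Proof.
move=> Hi.
have [HL _ _] := Lw_spec Hi.
have HD := Dw_pos w i.
have P0 : period (factor w i (Lw w i)) (Dw w i).
{ apply/periodP; try slia. split => // k; rewrite /Dw; slia. }
have [H1 H2 H3] : [/\ 1 <= Sw w i <= i, period (factor w (Sw w i) (Lw w i)) (Dw w i) & forall j, 1 <= j < Sw w i -> ~~ period (factor w j (Lw w i)) (Dw w i)] := bigmin_nat (P := fun j => period (factor w j (Lw w i)) (Dw w i)) (a := 1) (b := i.+1) (d := i) P0 ltac:(slia) ltac:(slia).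
split => //.
- have Hx : 1 <= Sw w i by slia.
  have Hy : Lw w i <= size w by slia.
  by case/(periodP (Dw w i) Hx Hy): H2.
- move=> j Hj Hp; have := H3 j Hj; move/negP; apply.
  have Hx : 1 <= j by slia.
  have Hy : Lw w i <= size w by slia.
  by apply/(periodP (Dw w i) Hx Hy).
Qed.

Lemma left_mis w D s e : perw w D s.+1 e -> ~ perw w D s e -> letter w s != letter w (s + D).
Proof.
move=> H1 H2; apply/negP => /eqP H; apply: H2 => k Hk1 Hk2.
case: (ltngtP k s) => Hks; [slia | by apply: H1 | by subst k].
Qed.

Lemma right_mis w D s e : perw w D s e -> ~ perw w D s e.+1 ->
  s + D <= e.+1 /\ letter w (e.+1 - D) != letter w e.+1.
Proof.
move=> H1 H2.
case: (leqP (s + D) e.+1) => HsD; last first.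
{ exfalso; apply: H2 => k Hk1 Hk2; slia. }
split => //; apply/negP => /eqP H; apply: H2 => k Hk1 Hk2.
case: (ltngtP (k + D) e.+1) => Hks; [apply: H1; slia | slia |].
rewrite Hks -H; congr letter; slia.
Qed.

Record RD (u : word) (j D S E : nat) (c : bool) : Prop := {
  rd_S : 1 <= S <= j;
  rd_E : j + D <= E.+1;
  rd_En : E <= size u;
  rd_D : 0 < D;
  rd_per : perw u D S E;
  rd_left : S = 1 \/ letter u S.-1 != letter u (S.-1 + D);
  rd_right : E = size u \/ (letter u E.+1 = c /\ letter u (E.+1 - D) = ~~ c);
  rd_ly : lyndon c (factor u j (j + D - 1));
  rd_c : cw u j = c }.

Lemma bool_cases (a b : bool) : a != b -> (a = true /\ b = false) \/ (a = false /\ b = true).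
Proof. by case: a; case: b; auto. Qed.

Lemma pos_data w i : 1 <= i <= size w ->
  RD w i (Dw w i) (Sw w i) (Ew w i) (cw w i) /\ Lw w i = i + Dw w i - 1.
Proof.
move=> Hi.
have [HL1 HL2 HL3] := Lw_spec Hi.
have [HE1 HE2 HE3] := Ew_spec Hi.
have [HS1 HS2 HS3] := Sw_spec Hi.
have HD := Dw_pos w i.
have HLD : Lw w i = i + Dw w i - 1 by rewrite /Dw; slia.
have HEL : Lw w i <= Ew w i.
{ rewrite leqNgt; apply/negP => H; apply: (HE3 (Lw w i)); first by slia.
  move=> k Hk1 Hk2; rewrite /Dw in Hk2; slia. }
split => //; split => //.
- slia.
- by rewrite /Dw; slia.
- apply: (perw_overlap HS2 HE2) => //; rewrite /Dw; slia.
- case: (ltnP 1 (Sw w i)) => HS; last by left; slia.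
  right; have := @left_mis w (Dw w i) (Sw w i).-1 (Lw w i).
  have -> : (Sw w i).-1.+1 = Sw w i by slia.
  move=> /(_ HS2); apply; apply: HS3; slia.
- case: (ltnP (Ew w i) (size w)) => HEn; last by left; slia.
  right; have [Hle Hne] := right_mis HE2 (HE3 (Ew w i).+1 ltac:(slia)).
  have Hnly : ~~ lyndon (cw w i) (factor w i (Ew w i).+1) by apply: HL3; slia.
  have HLX : letter w (Ew w i).+1 = ~~ cw w i -> letter w ((Ew w i).+1 - Dw w i) = cw w i -> False.
  { move=> H1 H2; move/negP: Hnly; apply.
    apply: (@LX w (cw w i) i (Dw w i) (Ew w i)) => //; try slia. by rewrite -HLD. }
  case: (bool_cases Hne) => [[Ha Hb]|[Ha Hb]]; case Hc: (cw w i);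
    rewrite ?Ha ?Hb ?Hc in HLX *; try done; exfalso; by apply: HLX.
- by rewrite -HLD.
Qed.

Lemma root_lemma u j D S E c : RD u j D S E c ->
  [/\ Lw u j = j + D - 1, Dw u j = D, Ew u j = E & Sw u j = S].
Proof.
case=> HS HE HEn HD Hp Hl Hr Hly Hc.
have Hj : 1 <= j <= size u by slia.
have HL : Lw u j = j + D - 1.
{ have [HL1 HL2 HL3] := Lw_spec Hj; rewrite Hc in HL2 HL3.
  case: (ltngtP (Lw u j) (j + D - 1)) => H //.
  - exfalso; move/negP: (HL3 (j + D - 1) ltac:(slia)); by apply.
  - exfalso; case: (leqP (Lw u j) E) => HLE.
    + move/negP: (@not_lyndon_per u c j (Lw u j) D ltac:(slia) ltac:(slia) HD ltac:(slia)
         (@perw_sub u D S E j (Lw u j) Hp ltac:(slia) HLE)); by apply.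
    + case: Hr => [HEs|[H1 H2]]; first by slia.
      move/negP: (@LS u c j D E (Lw u j) ltac:(slia) HD HE HLE ltac:(slia)
         (@perw_sub u D S E j E Hp ltac:(slia) (leqnn _)) H1 H2); by apply. }
have HDw : Dw u j = D by rewrite /Dw HL; slia.
split => //.
- have [HE1 HE2 HE3] := Ew_spec Hj; rewrite HDw in HE2 HE3.
  case: (ltngtP (Ew u j) E) => H //.
  + exfalso; apply: (HE3 E ltac:(slia)); exact: (@perw_sub u D S E j E Hp ltac:(slia) (leqnn _)).
  + exfalso; case: Hr => [HEs|[H1 H2]]; first by slia.
    have := HE2 (E.+1 - D) ltac:(slia) ltac:(slia).
    have -> : E.+1 - D + D = E.+1 by slia.
    rewrite H1 H2; by case: (c).
- have [HS1 HS2 HS3] := Sw_spec Hj; rewrite HDw HL in HS2 HS3.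
  case: (ltngtP (Sw u j) S) => H //.
  + exfalso; case: Hl => [HS0|HSm]; first by slia.
    have := HS2 S.-1 ltac:(slia) ltac:(slia).
    move=> Heq; move: HSm; by rewrite Heq eqxx.
  + exfalso; apply: (HS3 S ltac:(slia)); exact: (@perw_sub u D S E S (j + D - 1) Hp (leqnn _) ltac:(slia)).
Qed.

Lemma lper_RD u j D S E c : RD u j D S E c -> lper (factor u S E) = D.
Proof.
case=> HS HE HEn HD Hp Hl Hr Hly Hc.
have [H1 H2] := lper_spec (factor u S E).
have HSE1 : 1 <= S by slia.
have Hper : period (factor u S E) D by apply/(periodP D HSE1 HEn).
have Hle := H2 _ Hper.
case/(periodP _ HSE1 HEn): H1 => Hp0 Hpw.
case: (ltngtP (lper (factor u S E)) D) => H //; last by slia.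
exfalso; move/negP: (@not_lyndon_per u c j (j + D - 1) (lper (factor u S E)) ltac:(slia) ltac:(slia) Hp0 ltac:(slia)
   (@perw_sub u (lper (factor u S E)) S E j (j + D - 1) Hpw ltac:(slia) ltac:(slia))); by apply.
Qed.

Lemma run_iff u j D S E c : RD u j D S E c -> (is_run u S E <-> D.*2 <= E - S + 1).
Proof.
move=> R; have Hl := lper_RD R; case: R => HS HE HEn HD Hp Hlf Hr Hly Hc.
rewrite /is_run Hl; split; first by case.
move=> H; split => //; try slia.
Qed.

Ltac prune := repeat match goal with H : ?T |- _ => lazymatch T with
  | is_true (leq _ _) => fail | is_true (andb _ _) => fail | @eq nat _ _ => fail
  | _ => clear H end end.
Ltac slia ::= try prune; lia || match goal with |- _ -> _ => fail 1 | _ => (repeat (apply/andP; split); lia) end.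

Lemma ext_left u D E S0 : 1 <= S0 -> perw u D S0 E ->
  exists S', [/\ 1 <= S' <= S0, perw u D S' E &
                 (S' = 1 \/ letter u S'.-1 != letter u (S'.-1 + D))].
Proof.
elim: S0 => [//|S0 IH] _ Hp.
case: (posnP S0) => HS0.
- subst S0; exists 1; split => //; by left.
- case: (eqVneq (letter u S0) (letter u (S0 + D))) => Heq.
  + have Hp' : perw u D S0 E.
    { move=> k Hk1 Hk2; case: (ltngtP k S0) => H; [slia | apply: Hp; slia | by subst k]. }
    have [S' [H1 H2 H3]] := IH HS0 Hp'; exists S'; split => //; slia.
  + exists S0.+1; split => //; first by slia. by right.
Qed.

Lemma ext_right u D S E0 : E0 <= size u -> perw u D S E0 ->
  exists E', [/\ E0 <= E' <= size u, perw u D S E' &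
                 (E' = size u \/ letter u E'.+1 != letter u (E'.+1 - D))].
Proof.
move=> H; move Hm : (size u - E0) => m; elim: m E0 H Hm => [|m IH] E0 H Hm Hp.
- exists E0; split => //; [slia | left; slia].
- case: (eqVneq (letter u E0.+1) (letter u (E0.+1 - D))) => Heq.
  + have Hp' : perw u D S E0.+1.
    { move=> k Hk1 Hk2; case: (ltngtP (k + D) E0.+1) => H'; [apply: Hp; slia | slia |].
      rewrite H' Heq; congr letter; slia. }
    have [E' [H1 H2 H3]] := IH E0.+1 ltac:(slia) ltac:(slia) Hp'; exists E'; split => //; slia.
  + exists E0; split => //; [slia | by right].
Qed.

Lemma lyndon_both c x : lyndon c x -> lyndon (~~ c) x -> 1 < size x -> False.
Proof.
move=> H1 H2 Hs; have [A _] := lyndon_last H1 Hs; have [B _] := lyndon_last H2 Hs.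
by move: B; rewrite A; case: (c).
Qed.

Lemma size_root w j D : 1 <= j -> j + D <= (size w).+1 -> 0 < D ->
  size (factor w j (j + D - 1)) = D.
Proof. move=> H1 H2 H3; rewrite size_factor //; slia. Qed.

Lemma rw_spec w r b :
  (forall j, 2 <= j <= size w -> Rw w j = r -> lyndon b (factor w j (Lw w j)) -> rw w r b <= j) /\
  (rw w r b = (size w).+1 \/
   [/\ 2 <= rw w r b <= size w, Rw w (rw w r b) = r & lyndon b (factor w (rw w r b) (Lw w (rw w r b)))]).
Proof.
rewrite /rw.
have [H1 [H0 H2]] := bigmin_spec (index_iota 2 (size w).+1)
  (fun i => (Rw w i == r) && lyndon b (factor w i (Lw w i))) (size w).+1.
split.
- move=> j Hj HR Hly; apply: H1; first by rewrite mem_index_iota; slia.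
  by rewrite HR eqxx Hly.
- case: H2 => [->|[H3 /andP[/eqP H4 H5]]]; [by left | right].
  move: H3; rewrite mem_index_iota => H3; split => //; slia.
Qed.

Lemma factor_shift w D S E M m : perw w D S E -> 1 <= S <= M -> M + m * D + D <= E.+1 ->
  E <= size w -> factor w (M + m * D) (M + m * D + D - 1) = factor w M (M + D - 1).
Proof.
move=> Hp HSM HE HEn; apply: (@eq_from_nth _ false).
- rewrite !size_factor; try slia.
- move=> s; rewrite size_factor; try slia. move=> Hs.
  rewrite !nth_factor; try slia.
  have -> : M + m * D + s = (M + s) + m * D by slia.
  apply: (perw_mult Hp); slia.
Qed.

Lemma get_q w p D S c : RD w p D S (size w) c -> 1 < D -> 2 <= p ->
  Sw w p = S -> Ew w p = size w -> Dw w p = D ->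
  lyndon (fw w (S, size w)) (factor w p (p + D - 1)) ->
  exists q, [/\ S < q < p, p < q + D, lyndon (~~ fw w (S, size w)) (factor w q (q + D - 1))
            & RD w q D S (size w) (~~ fw w (S, size w))].
Proof.
move=> R HD1 Hp2 HSp HEp HDp Hlyf.
have Hlper := lper_RD R.
have [HL _ _ _] := root_lemma R.
have [HS HE HEn HD Hp Hl Hr Hly Hc] := R.
set f := fw w (S, size w) in Hlyf *.
have HRp : Rw w p = (S, size w) by rewrite /Rw HSp HEp.
have Hf : rw w (S, size w) (~~ f) <= rw w (S, size w) f.
{ rewrite /f /fw /= Hlper; have -> : (D == 1) = false by apply/eqP; slia.
  by case: (leqP (rw w (S, size w) false) (rw w (S, size w) true)) => H /=; [ | apply: ltnW]. }
have [Hf1 _] := rw_spec w (S, size w) f.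
have Hfp : rw w (S, size w) f <= p by apply: Hf1 => //; [slia | rewrite HL].
have [_ [Hdef|[HM1 HM2 HM3]]] := rw_spec w (S, size w) (~~ f); first by slia.
set M := rw w (S, size w) (~~ f) in Hf HM1 HM2 HM3.
clearbody M f.
have [RM HLM] := pos_data (w := w) (i := M) ltac:(slia).
have [HSM HEM] : Sw w M = S /\ Ew w M = size w by move: HM2; rewrite /Rw => -[-> ->].
rewrite HSM HEM in RM.
have [HS' HE' HEn' HD' Hp' Hl' Hr' Hly' Hc'] := RM.
rewrite HLM in HM3.
have HDM : Dw w M = D.
{ have HSp' : S <= p by case/andP: HS.
  have HpD : p + D - 1 <= size w by move: HE HD; clear; lia.
  have HMD : M + Dw w M - 1 <= size w by move: HE' HD'; clear; lia.
  have HSM2 : S <= M by case/andP: HS'.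
  case: (ltngtP (Dw w M) D) => H //; exfalso.
  - have H1 : Dw w M < (p + D - 1).+1 - p by move: H HD; clear; lia.
    move/negP: (@not_lyndon_per w f p (p + D - 1) (Dw w M) ltac:(move: Hp2; clear; lia) HpD HD' H1
      (@perw_sub w (Dw w M) S (size w) p (p + D - 1) Hp' HSp' HpD)); by apply.
  - have H1 : D < (M + Dw w M - 1).+1 - M by move: H HD'; clear; lia.
    move/negP: (@not_lyndon_per w (~~ f) M (M + Dw w M - 1) D ltac:(move: HM1; clear; lia) HMD HD H1
      (@perw_sub w D S (size w) M (M + Dw w M - 1) Hp HSM2 HMD)); by apply. }
rewrite HDM in HM3 HE' Hly'.
have HszM : size (factor w M (M + D - 1)) = D by apply: size_root; slia.
have HcM : cw w M = ~~ f.
{ case: (eqVneq (cw w M) (~~ f)) => // Hne; exfalso.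
  have Hne' : cw w M = f by move: Hne; case: (cw w M); case: (f).
  rewrite Hne' in Hly'; apply: (@lyndon_both f (factor w M (M + D - 1))) => //; slia. }
have HlastM : letter w (M + D - 1) = f.
{ have [_ H] := lyndon_last HM3 ltac:(slia). rewrite HszM nth_factor // in H; try slia.
  move: H; have -> : M + D.-1 = M + D - 1 by slia. by rewrite negbK. }
have HSM' : S < M.
{ case: (ltngtP S M) => H //; [slia|].
  exfalso; subst M; case: Hl => [HS1|Hne]; first by slia.
  move: Hne; have -> : S.-1 + D = S + D - 1 by slia.
  have HlS : letter w S.-1 = f by move: HcM; rewrite /cw; case: (letter w S.-1); case: (f).
  by rewrite HlastM HlS eqxx. }
have HszP : size (factor w p (p + D - 1)) = D by apply: size_root; slia.
have HMp : M < p.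
{ case: (ltngtP M p) => H //; exfalso; first by slia.
  subst M; apply: (@lyndon_both f (factor w p (p + D - 1))) => //; slia. }
set m := (p - M) %/ D.
have Hm := divn_eq (p - M) D; have Hmod : (p - M) %% D < D by rewrite ltn_mod; slia.
set q := M + m * D.
have Hq : q <= p by rewrite /q; slia.
have Hpq : p < q + D by rewrite /q; slia.
have Hfq : factor w q (q + D - 1) = factor w M (M + D - 1).
{ apply: (factor_shift Hp); slia. }
have Hlyq : lyndon (~~ f) (factor w q (q + D - 1)) by rewrite Hfq.
have Hqp : q < p.
{ case: (ltngtP q p) => H //; [slia | subst q].
  exfalso; apply: (@lyndon_both f (factor w p (p + D - 1))) => //; [by rewrite -H | slia]. }
have HMq : M <= q by rewrite /q; slia.
exists q; split => //; try slia.
split => //; try slia.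
- rewrite /cw; have Hlq : letter w q.-1 = f.
  { rewrite (_ : q.-1 = (q.-1) + 0 * D) ?mul0n ?addn0 //.
    rewrite Hp; try slia. have -> : q.-1 + D = q + D - 1 by slia.
    have [_ H] := lyndon_last Hlyq ltac:(rewrite Hfq; slia).
    move: H; rewrite Hfq HszM nth_factor; try slia.
    have -> : M + D.-1 = M + D - 1 by slia. rewrite negbK => <-.

    have -> : q + D - 1 = (M + D - 1) + m * D by rewrite /q; slia.
    apply: (perw_mult Hp); rewrite /q in Hq Hpq *; slia. }
  by rewrite Hlq.
Qed.

Lemma lost_from_RD u j D S E g : RD u j D S E g -> 1 < j -> D.*2 <= E - S + 1 -> j + D <= E ->
  (E < size u -> lost u j) /\
  (E = size u -> S < j -> (g = fw u (S, E) \/ D = 1) -> lost u j).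
Proof.
move=> R Hj HDS HjD.
have [HL HDw HEw HSw] := root_lemma R.
have Hrun : is_run u S E by apply/(run_iff R).
have HEn := rd_En R.
split => [HE|HE HSj Hg]; (split; first by slia); cbv zeta; rewrite HSw HEw HDw.
- by constructor 2; split.
- constructor 3; split => //. rewrite HL.
  case: Hg => [<-|HD1]; first exact: rd_ly R.
  apply: lyndon1; rewrite size_factor; slia.
Qed.

Lemma two_roots u D S E f p1 p2 : perw u D S E -> 1 <= S <= p1 -> p1 < p2 < p1 + D ->
  p2 + D <= E.+1 -> E <= size u ->
  lyndon f (factor u p1 (p1 + D - 1)) -> lyndon f (factor u p2 (p2 + D - 1)) -> False.
Proof.
move=> Hp HS Hp12 HpE HE Ly1 Ly2.
have Hsz1 : size (factor u p1 (p1 + D - 1)) = D by apply: size_root; slia.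
have Hsz2 : size (factor u p2 (p2 + D - 1)) = D by apply: size_root; slia.
have Hk1 : 0 < p2 - p1 < size (factor u p1 (p1 + D - 1)) by rewrite Hsz1; slia.
have Hk2 : 0 < D - (p2 - p1) < size (factor u p2 (p2 + D - 1)) by rewrite Hsz2; slia.
have [t [Ht Ag X R]] := lyndonE Ly1 Hk1.
have [t' [Ht' Ag' X' R']] := lyndonE Ly2 Hk2.
rewrite Hsz1 in Ht; rewrite Hsz2 in Ht'.
rewrite !nth_factor in X R X' R'; try slia.
apply: (@cross (fun v => letter u (p1 + v)) (fun v => letter u (p2 + v)) f t' t) => /=.
- move=> v Hv; have := Ag' v Hv; rewrite !nth_factor; try slia. move=> ->.
  have -> : p2 + (v + (D - (p2 - p1))) = (p1 + v) + D by slia.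
  by rewrite -Hp; try slia.
- done.
- rewrite -R'; have -> : p2 + (t' + (D - (p2 - p1))) = (p1 + t') + D by slia.
  by rewrite -Hp; try slia.
- move=> v Hv; have := Ag v Hv; rewrite !nth_factor; try slia. move=> ->.
  congr letter; slia.
- done.
- rewrite -R; congr letter; slia.
Qed.

Section Cat.
Variables (w1 w w2 : word).
Local Notation w' := (w1 ++ w ++ w2).
Local Notation a := (size w1).

Lemma size_w' : size w' = a + size w + size w2.
Proof. exact: size_cat3. Qed.

Lemma perw_cat D s e : perw w D s e -> 1 <= s -> e <= size w -> perw w' D (a + s) (a + e).
Proof.
move=> Hp Hs He k Hk1 Hk2.
have -> : k = a + (k - a) by slia.
rewrite -addnA !letter_cat; try slia. apply: Hp; slia.
Qed.

Lemma lost_range p : lost w p -> 1 < p < size w.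
Proof.
case=> Hp; have [R HL] := pos_data (w := w) (i := p) ltac:(slia).
have [HL' HD HE HS] := root_lemma R.
case: R => HS1 HE1 HEn HD0 _ _ _ _ _.
case=> [[H1 H2 H3]|[H1 H2 H3]|[H1 H2 H3 H4 H5]]; slia.
Qed.


Lemma rd_cat_int p D S E c : RD w p D S E c -> E < size w -> 2 <= p ->
  exists S2, [/\ RD w' (a + p) D S2 (a + E) c, S2 <= a + S & (1 < S -> S2 = a + S)].
Proof.
case=> HS HE HEn HD Hp Hl Hr Hly Hc HEs Hp2.
have Hp' := perw_cat Hp ltac:(slia) HEn.
have [S2 [HS2 HpS2 Hl2 Heq]] : exists S2, [/\ 1 <= S2 <= a + S, perw w' D S2 (a + E),
   (S2 = 1 \/ letter w' S2.-1 != letter w' (S2.-1 + D)) & (1 < S -> S2 = a + S)].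
{ case: (ltnP 1 S) => HS1.
  - exists (a + S); split => //; first by slia.
    right; case: Hl => [|Hl]; first by slia.
    have -> : (a + S).-1 = a + S.-1 by slia.
    rewrite -addnA !letter_cat //; slia.
  - have [S2 [H1 H2 H3]] := ext_left (S0 := a + S) ltac:(slia) Hp'.
    exists S2; split => //; slia. }
exists S2; split => //; last by slia.
split => //; try slia.
- rewrite size_w'; slia.
- right; case: Hr => [|[H1 H2]]; first by slia.
  have -> : (a + E).+1 = a + E.+1 by slia.
  have -> : a + E.+1 - D = a + (E.+1 - D) by slia.
  rewrite !letter_cat //; slia.
- have -> : a + p + D - 1 = a + (p + D - 1) by slia.
  rewrite factor_cat //; slia.
- rewrite cw_cat //; slia.
Qed.

Lemma rd_cat_border p D S c : RD w p D S (size w) c -> 2 <= p ->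
  exists S2 E2, [/\ 1 <= S2 <= a + S, a + size w <= E2 <= size w', perw w' D S2 E2,
     (S2 = 1 \/ letter w' S2.-1 != letter w' (S2.-1 + D)) &
     (E2 = size w' \/ letter w' E2.+1 != letter w' (E2.+1 - D))].
Proof.
case=> HS HE HEn HD Hp Hl Hr Hly Hc Hp2.
have Hp' := perw_cat Hp ltac:(slia) HEn.
have [S2 [H1 H2 H3]] := ext_left (S0 := a + S) ltac:(slia) Hp'.
have Hsz : a + size w <= size w' by rewrite size_w'; slia.
have [E2 [H4 H5 H6]] := ext_right Hsz H2.
exists S2, E2; split => //.
Qed.


Lemma lost_int p : lost w p -> Ew w p < size w -> lost w' (a + p).
Proof.
move=> Hlost HE; have /andP[Hp1 Hpn] := lost_range Hlost.
have [R HL] := pos_data (w := w) (i := p) ltac:(slia).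
have [S2 [R' HS2 HS2eq]] := rd_cat_int R HE ltac:(slia).
have [HL' HD' HE' HS'] := root_lemma R'.
have Hrun := run_iff R; have Hrun' := run_iff R'.
have HSp := rd_S R.
case: Hlost => _ H; cbv zeta in H.
split; first by rewrite size_w'; slia.
cbv zeta; rewrite HS' HE' HD'.
case: H => [[H1 H2 H3]|[H1 H2 H3]|[H1 H2 H3 H4 H5]].
- constructor 1; split; first by rewrite size_w'; slia.
  + rewrite HS2eq //; slia.
  + have HS2e := HS2eq ltac:(slia); rewrite HS2e in Hrun' *.
    move=> /Hrun'; have -> : a + Ew w p - (a + Sw w p) + 1 = Ew w p - Sw w p + 1 by slia.
    by move/Hrun.
- constructor 2; split; first by rewrite size_w'; slia.
  + apply/Hrun'; move/Hrun: H2; slia.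
  + slia.
- slia.
Qed.


Definition Flip p v := [/\ v < p < v + Dw w p, ~ lost w v, Rw w v = Rw w p, Ew w p = size w &
   (lyndon (fw w (Rw w p)) (factor w p (p + Dw w p - 1)) /\ lper (factor w (Sw w p) (size w)) = Dw w p)].

Lemma lost_border p : lost w p -> Ew w p = size w ->
  lost w' (a + p) \/ exists q, [/\ Flip p q, lost w' (a + q) & 1 <= q].
Proof.
move=> Hlost HEp; have /andP[Hp1 Hpn] := lost_range Hlost.
have [R HL] := pos_data (w := w) (i := p) ltac:(slia).
move: R HL Hlost; rewrite HEp.
have [D HD] : exists D, Dw w p = D by eexists.
have [S HS] : exists S, Sw w p = S by eexists.
rewrite HD HS => R HL Hlost.
have Hrun := run_iff R.
case: Hlost => _ H; cbv zeta in H; rewrite HEp HS HD in H.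
case: H => [[H1 _ _]|[H1 _ _]|[_ Hr HpD HSp Hlyf]]; try slia.
move/Hrun: Hr => Hr.
rewrite HL in Hlyf.
have [S2 [E2 [HS2 HE2 Hp2 Hl2 Hr2]]] := rd_cat_border R ltac:(slia).
have HD0 := rd_D R.
have HS1 := rd_S R.
have Hcw := @cw_cat w1 w w2 p ltac:(slia).
have Hsz' := size_w'.
case: (ltnP 1 D) => HD1; last first.
-
  left; have HD1' : D = 1 by slia. clear HD; subst D.
  have R' : RD w' (a + p) 1 S2 E2 (cw w p).
  { split => //; try slia.
    - case: Hr2 => [|Hm]; first by left.
      right; have HE2l : letter w' E2 = letter w' (a + p).-1.
      { have -> : E2 = (a + p).-1 + (E2 - (a + p).-1) * 1 by slia.
        apply: (perw_mult Hp2); slia. }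
      have HE2l' : letter w' (a + p).-1 = letter w p.-1.
      { have -> : (a + p).-1 = a + p.-1 by slia. rewrite letter_cat //; slia. }
      rewrite /cw; move: Hm; have -> : E2.+1 - 1 = E2 by slia.
      rewrite HE2l HE2l'; case: (letter w E2.+1) => //; case: (letter w p.-1) => //.
      all: try (by case: (letter w' E2.+1)).
    - apply: lyndon1; rewrite size_factor; slia. }
  have [_ Hb] := lost_from_RD R' ltac:(slia) ltac:(slia) ltac:(slia).
  case: (ltnP E2 (size w')) => HE2'.
  + have [Ha _] := lost_from_RD R' ltac:(slia) ltac:(slia) ltac:(slia). exact: Ha.
  + apply: Hb; [slia | slia | by right].
-
  have HfR : fw w (Rw w p) = fw w (S, size w) by rewrite /Rw HS HEp.
  have [q [Hq1 Hq2 Hlyq Rq]] := get_q R HD1 ltac:(slia) HS HEp HD Hlyf.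
  set f := fw w (S, size w) in Hlyf Hlyq Rq HfR.
  have Hszp : size (factor w p (p + D - 1)) = D by apply: size_root; slia.
  have Hcf : cw w p = f.
  { case: (eqVneq (cw w p) f) => // Hne; exfalso.
    have Hne' : cw w p = ~~ f by move: Hne; case: (cw w p); case: (f).
    have := rd_ly R; rewrite Hne' => Hly.
    apply: (@lyndon_both f (factor w p (p + D - 1))) => //; slia. }
  have [HLq HDq HEq HSq] := root_lemma Rq.
  have HFlip : Flip p q.
  { split.
    - rewrite HD; slia.
    - case=> _ H; cbv zeta in H; rewrite HEq HSq HLq in H.
      case: H => [[H1 _ _]|[H1 _ _]|[_ _ _ _ H5]]; try slia.
      apply: (@lyndon_both f (factor w q (q + D - 1))) => //; last first.
      + rewrite size_factor; slia.
    - by rewrite /Rw HEq HSq HS HEp.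
    - done.
    - rewrite HfR HD HS; split => //; exact: lper_RD R. }
  have Hcwq := @cw_cat w1 w w2 q ltac:(slia).
  have HrunD : D.*2 <= E2 - S2 + 1 by slia.
  have mkR : forall j g, S < j -> j + D <= (size w).+1 -> lyndon g (factor w j (j + D - 1)) -> cw w j = g ->
    (E2 = size w' \/ letter w' E2.+1 = g /\ letter w' (E2.+1 - D) = ~~ g) ->
    RD w' (a + j) D S2 E2 g.
  { move=> j g Hj1 Hj2 Hly Hc Hr'; split => //; try slia.
    - have -> : a + j + D - 1 = a + (j + D - 1) by slia. rewrite factor_cat //; slia.
    - rewrite cw_cat //; slia. }
  case: (ltnP E2 (size w')) => HE2'.
  + case: Hr2 => [|Hm]; first by slia.
    have Hm' := bool_neq Hm.
    case: (eqVneq (letter w' E2.+1) f) => Hg.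
    * left; rewrite Hg in Hm'.
      have R' := mkR p f ltac:(slia) ltac:(slia) Hlyf Hcf (or_intror (conj Hg Hm')).
      have [Ha _] := lost_from_RD R' ltac:(slia) HrunD ltac:(slia). exact: Ha.
    * right; exists q; split => //; last by slia.
      have Hg' : letter w' E2.+1 = ~~ f by move: Hg; case: (letter w' E2.+1); case: (f).
      rewrite Hg' negbK in Hm'.
      have Hcq : cw w q = ~~ f := rd_c Rq.
      have R' := mkR q (~~ f) ltac:(slia) ltac:(slia) Hlyq Hcq (or_intror (conj Hg' (etrans Hm' (esym (negbK f))))).
      have [Ha _] := lost_from_RD R' ltac:(slia) HrunD ltac:(slia). exact: Ha.
  + have HE2e : E2 = size w' by slia.
    have Hcq : cw w q = ~~ f := rd_c Rq.
    case: (eqVneq (fw w' (S2, E2)) f) => Hg.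
    * left; have R' := mkR p f ltac:(slia) ltac:(slia) Hlyf Hcf (or_introl HE2e).
      have [_ Hb] := lost_from_RD R' ltac:(slia) HrunD ltac:(slia).
      apply: Hb => //; [slia | by left].
    * right; exists q; split => //; last by slia.
      have R' := mkR q (~~ f) ltac:(slia) ltac:(slia) Hlyq Hcq (or_introl HE2e).
      have [_ Hb] := lost_from_RD R' ltac:(slia) HrunD ltac:(slia).
      apply: Hb => //; first by slia.
      left; move: Hg; case: (fw w' (S2, E2)); case: (f) => //.
Qed.

Definition Spec p v := [/\ 1 <= v <= size w - 1, lost w' (a + v), v <= p & (v = p \/ Flip p v)].

Lemma main_exists p : lost w p -> exists v, Spec p v.
Proof.
move=> Hl; have /andP[Hp1 Hpn] := lost_range Hl.
have [R _] := pos_data (w := w) (i := p) ltac:(slia).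
have HEn := rd_En R.
case: (ltnP (Ew w p) (size w)) => HE.
- exists p; split => //; [slia | exact: lost_int | by left].
- case: (lost_border Hl ltac:(slia)) => [H|[q [Hf Hq Hq1]]].
  + exists p; split => //; [slia | by left].
  + exists q; case: Hf => H1 H2 H3 H4 H5; split => //; try slia.
    by right; split.
Qed.

Lemma spec_inj p1 p2 v : lost w p1 -> lost w p2 -> Spec p1 v -> Spec p2 v -> p1 = p2.
Proof.
move=> L1 L2 [_ _ Hv1 [E1|F1]] [_ _ Hv2 [E2|F2]].
- by rewrite -E1 -E2.
- by case: F2 => _ H _ _ _; exfalso; apply: H; rewrite E1.
- by case: F1 => _ H _ _ _; exfalso; apply: H; rewrite E2.
- case: F1 => H11 _ H13 H14 [H15 H16]; case: F2 => H21 _ H23 H24 [H25 H26].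
  have HR : Rw w p1 = Rw w p2 by rewrite -H13 -H23.
  have [HS HE] : Sw w p1 = Sw w p2 /\ Ew w p1 = Ew w p2 by move: HR; rewrite /Rw => -[-> ->].
  have HD : Dw w p1 = Dw w p2 by rewrite -H16 -H26 HS.
  rewrite HR HD in H15; rewrite HD in H11.
  have /andP[Hp11 Hp1n] := lost_range L1.
  have /andP[Hp21 Hp2n] := lost_range L2.
  have [R1 _] := pos_data (w := w) (i := p1) ltac:(slia).
  have [R2 _] := pos_data (w := w) (i := p2) ltac:(slia).
  rewrite HD HS HE in R1.
  have HS1 := rd_S R1; have HS2 := rd_S R2; have HE2 := rd_E R2; have HE1 := rd_E R1.
  case: (ltngtP p1 p2) => H //; exfalso.
  + apply: (two_roots (rd_per R1) _ _ _ (rd_En R1) H15 H25); slia.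
  + apply: (two_roots (rd_per R1) _ _ _ (rd_En R1) H25 H15); slia.
Qed.
End Cat.

Lemma exists_max N (P : nat -> Prop) (h : nat -> nat) :
  (exists p, P p) -> (forall p, P p -> p < N) -> exists p0, P p0 /\ forall p, P p -> h p <= h p0.
Proof.
elim: N P => [|N IH] P [p Pp] HB; first by have := HB p Pp.
case: (classic (exists p, P p /\ p < N)) => [Hex|Hnex].
- have [p1 [[Pp1 Hp1] Hmax]] := IH (fun p => P p /\ p < N) Hex (fun p H => proj2 H).
  case: (classic (P N)) => PN.
  + case: (leqP (h N) (h p1)) => Hc.
    * exists p1; split => // q Pq; have := HB q Pq; rewrite ltnS leq_eqVlt => /orP[/eqP->|Hq] //.
      exact: Hmax.
    * exists N; split => // q Pq; have := HB q Pq; rewrite ltnS leq_eqVlt => /orP[/eqP->|Hq] //.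
      apply: leq_trans (Hmax q (conj Pq Hq)) (ltnW Hc).
  + exists p1; split => // q Pq; have := HB q Pq; rewrite ltnS leq_eqVlt => /orP[/eqP Hq|Hq].
    * by subst q.
    * exact: Hmax.
- have HN : forall q, P q -> q = N.
  { move=> q Pq; have := HB q Pq; rewrite ltnS leq_eqVlt => /orP[/eqP->|Hq] //.
    by exfalso; apply: Hnex; exists q. }
  exists p; split => // q Pq; by rewrite (HN q Pq) (HN p Pp).
Qed.

Lemma matching_aux N (P Q : nat -> Prop) (g : nat -> nat) :
  (forall p, P p -> p < N) -> (forall p, P p -> g p <= p /\ Q (g p)) ->
  (forall p q, P p -> P q -> g p = g q -> p = q) ->
  exists mu : nat -> nat, [/\ (forall p q, P p -> P q -> p < q -> mu p < mu q),
     (forall p, P p -> mu p <= p /\ Q (mu p)) &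
     (forall p, P p -> exists p', P p' /\ mu p = g p')].
Proof.
elim: N P g => [|N IH] P g HB Hg Hinj.
- exists g; split => [p q Pp|p Pp|p Pp]; [by have := HB p Pp | exact: Hg | by exists p].
case: (classic (P N)) => PN; last first.
- have HB' : forall p, P p -> p < N.
  { move=> p Pp; have := HB p Pp; rewrite ltnS leq_eqVlt => /orP[/eqP Hp|//].
    by subst p. }
  exact: IH.
have [p0 [Pp0 Hmax]] := exists_max g (ex_intro _ N PN) HB.
set P' := fun p => P p /\ p < N.
set g' := fun p => if p == p0 then g N else g p.
have Hg' : forall p, P' p -> g' p <= p /\ Q (g' p).
{ move=> p [Pp Hp]; rewrite /g'; case: eqP => [->|_]; last exact: Hg.
  split; last exact: (proj2 (Hg N PN)).
  apply: leq_trans (Hmax N PN) (proj1 (Hg p0 Pp0)). }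
have Hinj' : forall p q, P' p -> P' q -> g' p = g' q -> p = q.
{ move=> p q [Pp Hp] [Pq Hq]; rewrite /g'.
  case: eqP => Ep; case: eqP => Eq; [by rewrite Ep Eq | | | exact: Hinj].
  - move=> H; have := Hinj _ _ PN Pq H; lia.
  - move=> H; have := Hinj _ _ Pp PN H; lia. }
have [mu' [Hm1 Hm2 Hm3]] := IH P' g' (fun p H => proj2 H) Hg' Hinj'.
have Hlt : forall p, P' p -> mu' p < g p0.
{ move=> p Pp; have [p'' [[Pp'' Hp''] ->]] := Hm3 p Pp; rewrite /g'.
  case: eqP => E.
  - subst p''; rewrite ltn_neqAle Hmax // andbT; apply/eqP => H.
    have := Hinj _ _ PN Pp0 H; lia.
  - rewrite ltn_neqAle Hmax // andbT; apply/eqP => H.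
    by apply: E; apply: Hinj. }
exists (fun p => if p == N then g p0 else mu' p); split.
- move=> p q Pp Pq Hpq.
  have Hp : p < N by have := HB q Pq; lia.
  have -> : (p == N) = false by apply/eqP; lia.
  case: eqP => Eq.
  + exact: Hlt.
  + apply: Hm1 => //; split => //; have := HB q Pq; lia.
- move=> p Pp; case: eqP => Ep.
  + subst p; split; last exact: (proj2 (Hg p0 Pp0)).
    apply: leq_trans (proj1 (Hg p0 Pp0)) _; have := HB p0 Pp0; lia.
  + apply: Hm2; split => //; have := HB p Pp; lia.
- move=> p Pp; case: eqP => Ep; first by exists p0.
  have HpN : p < N by have := HB p Pp; lia.
  have [p'' [[Pp'' _] ->]] := Hm3 p (conj Pp HpN).
  rewrite /g'; case: eqP => _; [by exists N | by exists p''].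
Qed.

Theorem lemma4 (w w1 w2 : word) :
  (forall p, lost w p -> 1 < p < size w) /\
  exists mu : nat -> nat,
    (forall p q, lost w p -> lost w q -> p < q -> mu p < mu q) /\
    (forall p, lost w p ->
       [/\ 1 <= mu p <= size w - 1,
           lost (w1 ++ w ++ w2) (size w1 + mu p) &
           mu p <= p]).
Proof.
split; first exact: lost_range.
have H : forall p, exists v, lost w p -> Spec w1 w w2 p v.
{ move=> p; case: (classic (lost w p)) => Hl.
  - have [v Hv] := main_exists w1 w2 Hl; by exists v.
  - by exists 0. }
pose g := fun p => proj1_sig (constructive_indefinite_description _ (H p)).
have Hg : forall p, lost w p -> Spec w1 w w2 p (g p).
{ move=> p; exact: (proj2_sig (constructive_indefinite_description _ (H p))). }
have [mu [M1 M2 _]] := @matching_aux (size w).+1 (lost w)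
  (fun v => 1 <= v <= size w - 1 /\ lost (w1 ++ w ++ w2) (size w1 + v)) g
  (fun p Hp => ltnW (proj2 (andP (lost_range Hp))))
  (fun p Hp => let: And4 h1 h2 h3 _ := Hg p Hp in conj h3 (conj h1 h2))
  (fun p q Hp Hq E => spec_inj Hp Hq (Hg p Hp) (ltac:(rewrite E; exact: Hg q Hq))).
exists mu; split => // p Hp; have [h1 [h2 h3]] := M2 p Hp; by split.
Qed.
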